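(* Let $\mathcal X$ be finite with $N=|\mathcal X|\ge2$, $c\in(0,1/N]$, $\varepsilon\ge0$, and let $K\in\mathcal M(\varepsilon,c)$. Then for all $P_X,Q_X\in\mathcal Q_{\mathcal X}(c)$ with $\mathrm{TV}(P_X\|Q_X)\le\delta$, $$H^2(K\circ P_X\|K\circ Q_X)\le\Xi(\varepsilon,c)\left(2-\frac{4}{\sqrt{(1-Nc)e^\varepsilon+1}+1}\right)\delta,$$ where $\Xi(\varepsilon,c)=\min\left\{\frac{e^\varepsilon-1}{e^\varepsilon(1-Nc)+1},1\right\}$.
   Context: $H^2(P\|Q)=\sum_y Q(y)\big(1-\sqrt{P(y)/Q(y)}\big)^2$ is the squared Hellinger divergence (the $f$-divergence with $f(t)=(1-\sqrt t)^2$), and $\mathrm{TV}(P\|Q)=\frac12\sum|P-Q|$. A kernel $K$ is a row-stochastic matrix with entries $K_{Y|X=x}(y)$, $(K\circ P_X)(y)=\sum_xK_{Y|X=x}(y)P_X(x)$. PML: $\ell_{K\times P_X}(X\to y)=\log\frac{\max_x K_{Y|X=x}(y)}{(K\circ P_X)(y)}$ for full-support $P_X$ and $(K\circ P_X)(y)>0$. $\mathcal Q_{\mathcal X}(c)=\{P_X:\min_xP_X(x)\ge c\}$; $C(K,\mathcal P)=\sup_{P_X\in\mathcal P}\sup_{y:(K\circ P_X)(y)>0}\ell_{K\times P_X}(X\to y)$; $\mathcal M(\varepsilon,c)$ is the set of kernels from $\mathcal X$ to a finite output set with $C(K,\mathcal Q_{\mathcal X}(c))\le\varepsilon$. *)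

(* Defs.v *)
From mathcomp Require Import all_boot all_order all_algebra.
From mathcomp Require Import reals.
From mathcomp Require Import sequences exp.
Set Implicit Arguments. Unset Strict Implicit. Unset Printing Implicit Defensive.
Import Order.TTheory GRing.Theory Num.Theory.
Local Open Scope ring_scope.

Section Defs.
Variable R : realType.

Definition is_dist (X : finType) (P : X -> R) : Prop :=
  (forall x, 0 <= P x) /\ \sum_(x : X) P x = 1.

(* Markov kernel (row-stochastic matrix) K x y = K_{Y|X=x}(y) *)
Definition is_kernel (X Y : finType) (K : X -> Y -> R) : Prop :=
  forall x, is_dist (K x).

Definition push (X Y : finType) (K : X -> Y -> R) (P : X -> R) : Y -> R :=
  fun y => \sum_(x : X) K x y * P x.

Definition Qset (X : finType) (c : R) (P : X -> R) : Prop :=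
  is_dist P /\ forall x, c <= P x.

Definition pml (X Y : finType) (K : X -> Y -> R) (P : X -> R) (y : Y) : R :=
  ln ((\big[Num.max/0]_(x : X) K x y) / push K P y).

(* K in M(eps,c): C(K, Q_X(c)) <= eps, i.e. the supremum of the PML over
   P in Q_X(c) and y with (K o P)(y) > 0 is at most eps *)
Definition in_M (X Y : finType) (eps c : R) (K : X -> Y -> R) : Prop :=
  is_kernel K /\
  forall P : X -> R, Qset c P -> forall y : Y, 0 < push K P y -> pml K P y <= eps.

(* squared Hellinger divergence, f-divergence with f(t) = (1 - sqrt t)^2;
   for Q(y) = 0 the usual convention Q f(P/Q) = P(y) lim_{t->oo} f(t)/t = P(y) *)
Definition hellinger2 (Y : finType) (P Q : Y -> R) : R :=
  \sum_(y : Y) (if Q y == 0 then P y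
                else Q y * (1 - Num.sqrt (P y / Q y)) ^+ 2).

Definition TV (X : finType) (P Q : X -> R) : R :=
  2^-1 * \sum_(x : X) `|P x - Q x|.

Definition Xi (N : nat) (eps c : R) : R :=
  Num.min ((expR eps - 1) / (expR eps * (1 - N%:R * c) + 1)) 1.

End Defs.

(* Main.v *)
Require Import Defs.
From mathcomp Require Import all_boot all_order all_algebra.
From mathcomp Require Import reals.
From mathcomp Require Import sequences exp.
From mathcomp Require Import ring lra.
Import Order.TTheory GRing.Theory Num.Theory.
Local Open Scope ring_scope.

Section Aux.
Variable R : realType.
Variables X Y : finType.

Lemma argmin_ex (x0 : X) (f : X -> R) : exists x1, forall x, f x1 <= f x.
Proof.
have [x1 _ H] := @arg_minP _ R X x0 xpredT f isT.
by exists x1 => x; apply: H.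
Qed.

Lemma kernel_bound (eps c : R) (K : X -> Y -> R) (x0 x1 : X) (y : Y) :
  0 < c -> 0 <= 1 - #|X|%:R * c -> in_M eps c K ->
  K x0 y <= expR eps * (c * \sum_x K x y + (1 - #|X|%:R * c) * K x1 y).
Proof.
set a := 1 - #|X|%:R * c.
move=> c0 a0 [Kk HM].
pose Ps := fun x : X => c + (if x == x1 then a else 0).
have Kge0 : forall x y, 0 <= K x y by move=> x y'; case: (Kk x) => h _; exact: h.
have hQ : Qset c Ps.
  split; [split|].
  - by move=> x; rewrite /Ps; case: ifP => _; lra.
  - rewrite /Ps big_split /= sumr_const -[#|xpredT|]/#|X|.
    rewrite (bigD1 x1) //= eqxx big1 ?addr0; last by move=> x /negbTE ->.
    rewrite /a -mulr_natl; lra.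
  - by move=> x; rewrite /Ps; case: ifP => _; lra.
have hpush : push K Ps y = c * \sum_x K x y + a * K x1 y.
  rewrite /push /Ps.
  under eq_bigr do rewrite mulrDr.
  rewrite big_split /= -mulr_suml mulrC; congr (_ + _).
  rewrite (bigD1 x1) //= eqxx big1 ?addr0; first by rewrite mulrC.
  by move=> x /negbTE ->; rewrite mulr0.
have S0 : 0 <= \sum_x K x y by apply: sumr_ge0 => x _.
have KS : K x0 y <= \sum_x K x y.
  rewrite (bigD1 x0) //= lerDl; apply: sumr_ge0 => x _; exact: Kge0.
have pge0 : 0 <= push K Ps y.
  rewrite hpush; apply: addr_ge0; apply: mulr_ge0 => //; exact: ltW.
case: (ler0P (push K Ps y)) => hp.
  have hp0 : push K Ps y = 0 by apply/eqP; rewrite eq_le hp pge0.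
  rewrite -hpush hp0 mulr0.
  have : c * \sum_x K x y = 0.
    apply/eqP; rewrite eq_le mulr_ge0 ?andbT ?(ltW c0) //.
    apply: le_trans hp; rewrite hpush lerDl mulr_ge0 //.
  move/eqP; rewrite mulf_eq0 (gt_eqF c0) /= => /eqP S00.
  by rewrite -S00.
have := HM Ps hQ y hp; rewrite /pml.
set Mx := \big[Num.max/0]_x K x y.
have KM : K x0 y <= Mx by apply: le_bigmax.
case: (ler0P Mx) => hM.
  move=> _; apply: le_trans KM (le_trans hM _).
  rewrite -hpush; apply: mulr_ge0 => //; exact: ltW (expR_gt0 _).
move=> hln.
have rpos : 0 < Mx / push K Ps y by apply: divr_gt0.
have : Mx / push K Ps y <= expR eps.
  by rewrite -(lnK rpos) ler_expR.
rewrite ler_pdivrMr // -hpush => h; exact: le_trans KM h.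
Qed.

Lemma wsum_bound (eps c : R) (K : X -> Y -> R) (tau : Y -> R) (x0 x1 : X) :
  0 < c -> 0 <= 1 - #|X|%:R * c -> in_M eps c K -> (forall y, 0 <= tau y) ->
  \sum_y tau y * K x0 y <= expR eps * (c * \sum_x \sum_y tau y * K x y
                                      + (1 - #|X|%:R * c) * \sum_y tau y * K x1 y).
Proof.
move=> c0 a0 HK ht.
apply: (@le_trans _ _ (\sum_y tau y * (expR eps * (c * \sum_x K x y + (1 - #|X|%:R * c) * K x1 y)))).
  apply: ler_sum => y _; apply: ler_wpM2l => //; exact: kernel_bound.
rewrite le_eqVlt; apply/orP; left; apply/eqP.
rewrite exchange_big /=.
under [X in _ = _ * (_ * X + _)]eq_bigr do rewrite -mulr_sumr.
rewrite !mulr_sumr -big_split mulr_sumr; apply: eq_bigr => y _ /=; ring.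
Qed.

Lemma row_sum (eps c : R) (K : X -> Y -> R) x :
  in_M eps c K -> \sum_y K x y = 1.
Proof. by move=> [Kk _]; case: (Kk x). Qed.

Lemma row_ge0 (eps c : R) (K : X -> Y -> R) x y :
  in_M eps c K -> 0 <= K x y.
Proof. by move=> [Kk _]; case: (Kk x) => h _; exact: h. Qed.

Lemma gdiff (eps c : R) (K : X -> Y -> R) (sg : Y -> R) (x0 x1 : X) :
  0 < c -> 0 <= 1 - #|X|%:R * c -> 0 <= eps -> in_M eps c K ->
  (forall y, 0 <= sg y <= 1) ->
  \sum_y sg y * K x0 y - \sum_y sg y * K x1 y <= Xi #|X| eps c.
Proof.
move=> c0 a0 e0 HK hs.
have hs0 : forall y, 0 <= sg y by move=> y; case/andP: (hs y).
have hs1 : forall y, 0 <= 1 - sg y by move=> y; case/andP: (hs y) => _ h; lra.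
have h1 := @wsum_bound eps c K sg x0 x1 c0 a0 HK hs0.
have h2 := @wsum_bound eps c K (fun y => 1 - sg y) x1 x0 c0 a0 HK hs1.
have comp : forall x, \sum_y (1 - sg y) * K x y = 1 - \sum_y sg y * K x y.
  move=> x; under eq_bigr do rewrite mulrBl mul1r.
  by rewrite sumrB (row_sum _ _ _ x HK).
move: h2; rewrite /= !comp.
under eq_bigr do rewrite comp.
rewrite sumrB sumr_const -[#|xpredT|]/#|X| -mulr_natl mulr1 => h2.
have g0le : forall x, 0 <= \sum_y sg y * K x y.
  by move=> x; apply: sumr_ge0 => y _; apply: mulr_ge0 => //; exact: (row_ge0 _ _ _ _ _ HK).
have g1le : forall x, \sum_y sg y * K x y <= 1.
  move=> x; rewrite -(row_sum _ _ _ x HK); apply: ler_sum => y _.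
  have := row_ge0 _ _ _ x y HK; case/andP: (hs y) => _ h k; nra.
have E1 : 1 <= expR eps by apply: le_trans (expR_ge1Dx eps); lra.
move: a0 E1 h1 h2 (g0le x0) (g0le x1) (g1le x0) (g1le x1).
set g0 := \sum_y sg y * K x0 y; set g1 := \sum_y sg y * K x1 y.
set G := \sum_x \sum_y sg y * K x y; set E := expR eps; set n := #|X|%:R.
move=> a0 E1 h1 h2 ? ? ? ?.
rewrite /Xi le_min -/E -/n; apply/andP; split; last by lra.
have den : 0 < E * (1 - n * c) + 1 by nra.
rewrite ler_pdivlMr // -/E -/n; nra.
Qed.

Lemma push_sum (eps c : R) (K : X -> Y -> R) (P : X -> R) :
  in_M eps c K -> is_dist P -> \sum_y push K P y = 1.
Proof.
move=> HK [_ P1]; rewrite /push exchange_big /=.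
under eq_bigr do rewrite -mulr_suml (row_sum _ _ _ _ HK) mul1r.
exact: P1.
Qed.

Lemma tv_step (eps c : R) (K : X -> Y -> R) (P Q : X -> R) (x0 : X) :
  0 < c -> 0 <= 1 - #|X|%:R * c -> 0 <= eps -> in_M eps c K ->
  is_dist P -> is_dist Q ->
  \sum_y (if push K Q y <= push K P y then 1 else 0) * (push K P y - push K Q y)
    <= Xi #|X| eps c * TV P Q.
Proof.
move=> c0 a0 e0 HK [_ P1] [_ Q1].
set sg := fun y => if push K Q y <= push K P y then (1:R) else 0.
have hs : forall y, 0 <= sg y <= 1 by move=> y; rewrite /sg; case: ifP => _; rewrite ?lexx ?ler01.
set g := fun x => \sum_y sg y * K x y.
set D := fun x => P x - Q x.
have D0 : \sum_x D x = 0 by rewrite /D sumrB P1 Q1 subrr.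
have -> : \sum_y sg y * (push K P y - push K Q y) = \sum_x g x * D x.
  rewrite /push.
  under eq_bigr do rewrite -sumrB mulr_sumr.
  rewrite exchange_big /=; apply: eq_bigr => x _.
  rewrite /g mulr_suml; apply: eq_bigr => y _; rewrite /D; ring.
have [x1 hx1] := argmin_ex x0 g.
have -> : \sum_x g x * D x = \sum_x (g x - g x1) * D x.
  under [RHS]eq_bigr do rewrite mulrBl.
  by rewrite sumrB -mulr_sumr D0 mulr0 subr0.
apply: (@le_trans _ _ (\sum_x Xi #|X| eps c * ((`|D x| + D x) / 2))).
  apply: ler_sum => x _.
  have d0 : 0 <= g x - g x1 by rewrite subr_ge0.
  have dX : g x - g x1 <= Xi #|X| eps c by exact: gdiff.
  case: (lerP 0 (D x)) => hD.
    rewrite ger0_norm //; nra.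
  rewrite ltr0_norm //; nra.
rewrite -mulr_sumr /TV; apply: ler_wpM2l.
  rewrite /Xi le_min; apply/andP; split; last by rewrite ler01.
  apply: divr_ge0; first by rewrite subr_ge0; apply: le_trans (expR_ge1Dx eps); lra.
  have E1 : 1 <= expR eps by apply: le_trans (expR_ge1Dx eps); lra.
  nra.
rewrite -mulr_suml big_split /= D0 addr0; lra.
Qed.

Lemma hterm (p q B : R) :
  0 <= p -> 0 <= q -> 1 <= B -> p <= B * q -> q <= B * p ->
  (if q == 0 then p else q * (1 - Num.sqrt (p / q)) ^+ 2)
    <= (Num.sqrt B - 1) / (Num.sqrt B + 1) * `|p - q|.
Proof.
move=> p0 q0 B1 hpq hqp.
set s := Num.sqrt B.
have s1 : 1 <= s by rewrite /s -(sqrtr1 R) ler_sqrt //; lra.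
have k0 : 0 <= (s - 1) / (s + 1) by apply: divr_ge0; lra.
case: eqP => [qz|qn].
  have pz : p = 0 by apply/eqP; rewrite eq_le p0 andbT; move: hpq; rewrite qz mulr0.
  by rewrite pz; apply: mulr_ge0.
have qpos : 0 < q by rewrite lt_def q0 andbT; apply/eqP.
set sp := Num.sqrt p; set sq := Num.sqrt q.
have sp0 : 0 <= sp by apply: sqrtr_ge0.
have sqpos : 0 < sq by rewrite sqrtr_gt0.
have ep : p = sp ^+ 2 by rewrite sqr_sqrtr.
have eq' : q = sq ^+ 2 by rewrite sqr_sqrtr.
have hs1 : sp <= s * sq by rewrite /sp /s /sq -sqrtrM ?ler_sqrt //; [nra|lra].
have hs2 : sq <= s * sp by rewrite /sp /s /sq -sqrtrM ?ler_sqrt //; [nra|lra].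
have -> : q * (1 - Num.sqrt (p / q)) ^+ 2 = (sq - sp) ^+ 2.
  rewrite sqrtrM // sqrtrV // -/sp -/sq {1}eq'.
  field; exact: lt0r_neq0.
rewrite mulrAC ler_pdivlMr; last lra.
rewrite ep eq'.
case: (lerP sq sp) => h.
  rewrite ger0_norm; last nra.
  have : 0 <= (sp - sq) * (s * sq - sp) by apply: mulr_ge0; lra.
  nra.
rewrite ltr0_norm; last nra.
have : 0 <= (sq - sp) * (s * sp - sq) by apply: mulr_ge0; lra.
nra.
Qed.

Lemma decomp (c : R) (f w : X -> R) :
  \sum_x f x * w x = c * \sum_x f x + \sum_x f x * (w x - c).
Proof.
rewrite mulr_sumr -big_split /=; apply: eq_bigr => x _; ring.
Qed.

Lemma ratio (eps c : R) (K : X -> Y -> R) (P Q : X -> R) (x0 : X) (y : Y) :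
  0 < c -> 0 <= 1 - #|X|%:R * c -> 0 <= eps -> in_M eps c K ->
  Qset c P -> Qset c Q ->
  push K P y <= (1 + (1 - #|X|%:R * c) * expR eps) * push K Q y.
Proof.
move=> c0 a0 e0 HK [[_ P1] Pc] [[_ Q1] Qc].
have [x1 hx1] := argmin_ex x0 (fun x => K x y).
set a := 1 - #|X|%:R * c.
have sa : forall w : X -> R, \sum_x w x = 1 -> \sum_x (w x - c) = a.
  move=> w w1; rewrite sumrB w1 sumr_const -[#|xpredT|]/#|X| -mulr_natl /a //.
set S := \sum_x K x y.
set u := c * S + a * K x1 y.
have Kge0 : forall x, 0 <= K x y by move=> x; exact: (row_ge0 _ _ _ _ _ HK).
have S0 : 0 <= S by apply: sumr_ge0.
have hq : u <= push K Q y.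
  rewrite /push (decomp c) /u lerD2l -(sa Q Q1) mulr_suml.
  apply: ler_sum => x _; rewrite [X in _ <= X]mulrC; apply: ler_wpM2l; [by rewrite subr_ge0 | exact: hx1].
have hp : push K P y <= c * S + a * (expR eps * u).
  rewrite /push (decomp c) lerD2l -(sa P P1) mulr_suml.
  apply: ler_sum => x _; rewrite mulrC; apply: ler_wpM2l.
    by rewrite subr_ge0.
  exact: kernel_bound.
have E1 : 1 <= expR eps by apply: le_trans (expR_ge1Dx eps); lra.
have m0 := Kge0 x1.
move: hp hq a0; rewrite -/a /u => hp hq a0'.
have h1 : 0 <= a * K x1 y by apply: mulr_ge0.
have h2 : 0 <= (a * expR eps) * (push K Q y - (c * S + a * K x1 y)).
  by apply: mulr_ge0; [apply: mulr_ge0; lra | lra].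
have h3 : 0 <= c * S by apply: mulr_ge0; lra.
nra.
Qed.
End Aux.

Theorem corollary2 (R : realType) (X Y : finType) (eps c delta : R)
    (K : X -> Y -> R) :
  (2 <= #|X|)%N ->
  0 < c -> c <= (#|X|%:R)^-1 ->
  0 <= eps ->
  in_M eps c K ->
  forall P Q : X -> R, Qset c P -> Qset c Q ->
  TV P Q <= delta ->
  hellinger2 (push K P) (push K Q) <=
    Xi #|X| eps c *
    (2 - 4 / (Num.sqrt ((1 - #|X|%:R * c) * expR eps + 1) + 1)) * delta.
Proof.
move=> N2 c0 cN e0 HK P Q HP HQ Htv.
have npos : 0 < (#|X|%:R : R) by rewrite ltr0n; apply: leq_trans N2.
have a0 : 0 <= 1 - #|X|%:R * c.
  by rewrite subr_ge0 -ler_pdivlMl // mulr1.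
have /card_gt0P [x0 _] : (0 < #|X|)%N by apply: leq_trans N2.
have E1 : 1 <= expR eps by apply: le_trans (expR_ge1Dx eps); lra.
set B := (1 - #|X|%:R * c) * expR eps + 1.
have B1 : 1 <= B by rewrite /B; nra.
set s := Num.sqrt B.
have s1 : 1 <= s by rewrite /s -(sqrtr1 R) ler_sqrt //; lra.
set k := (s - 1) / (s + 1).
have k0 : 0 <= k by apply: divr_ge0; lra.
have hrat : forall (P Q : X -> R) y, Qset c P -> Qset c Q -> push K P y <= B * push K Q y.
  move=> P' Q' y hP hQ; have := @ratio R X Y eps c K P' Q' x0 y c0 a0 e0 HK hP hQ.
  by have -> : 1 + (1 - #|X|%:R * c) * expR eps = B by rewrite /B; ring.
have pge0 : forall (P : X -> R) y, Qset c P -> 0 <= push K P y.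
  move=> P' y [[hp _] _]; apply: sumr_ge0 => x _; apply: mulr_ge0 => //.
  exact: (row_ge0 _ _ _ _ _ _ _ _ HK).
have Xi0 : 0 <= Xi #|X| eps c.
  rewrite /Xi le_min; apply/andP; split; last by rewrite ler01.
  apply: divr_ge0; first by rewrite subr_ge0.
  nra.
have step1 : hellinger2 (push K P) (push K Q) <= k * \sum_y `|push K P y - push K Q y|.
  rewrite /hellinger2 mulr_sumr; apply: ler_sum => y _.
  by apply: hterm; auto.
have step2 : \sum_y `|push K P y - push K Q y| =
    2 * \sum_y (if push K Q y <= push K P y then 1 else 0) * (push K P y - push K Q y).
  have hs : \sum_y (push K P y - push K Q y) = 0.
    by rewrite sumrB (push_sum _ _ _ _ _ _ _ HK HP.1) (push_sum _ _ _ _ _ _ _ HK HQ.1) subrr.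
  transitivity (\sum_y (2 * ((if push K Q y <= push K P y then 1 else 0) * (push K P y - push K Q y)) - (push K P y - push K Q y))).
    2: by rewrite sumrB hs subr0 -mulr_sumr.
  apply: eq_bigr => y _; case: lerP => h.
    ring.
  ring.
have step3 := @tv_step R X Y eps c K P Q x0 c0 a0 e0 HK HP.1 HQ.1.
have ek : 2 - 4 / (s + 1) = 2 * k by rewrite /k; field; lra.
rewrite ek.
apply: (le_trans step1); rewrite step2.
apply: (@le_trans _ _ (k * (2 * (Xi #|X| eps c * TV P Q)))).
  apply: ler_wpM2l => //; apply: ler_wpM2l => //; lra.
have : Xi #|X| eps c * TV P Q <= Xi #|X| eps c * delta by apply: ler_wpM2l.
move=> h; have hk2 : 0 <= 2 * k by lra.
have := ler_wpM2l hk2 h. 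
move=> h'; apply: le_trans (le_trans _ h') _; rewrite le_eqVlt; apply/orP; left; apply/eqP; ring.
Qed.
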